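(* Let $G$ be a finite group. Then the deep commuting graph $\Delta_D(G)$ is complete if and only if $G$ is cyclic.
   Context: For a finite group $G$, let $M(G)$ denote its Schur multiplier. A Schur cover of $G$ is a group $\tilde{G}$ with a central extension $\{e\}\to M(G)\xrightarrow{\iota}\tilde{G}\xrightarrow{\pi}G\to\{e\}$ such that $\iota(M(G))\subseteq Z(\tilde{G})\cap[\tilde{G},\tilde{G}]$ (a stem extension) and $\tilde G$ has the maximal possible order among such stem extensions. The deep commuting graph $\Delta_D(G)$ is the simple graph with vertex set $G$ in which two distinct vertices $x,y$ are adjacent if and only if preimages of $x$ and $y$ under $\pi$ commute in $\tilde{G}$; this does not depend on the choice of Schur cover or of the preimages. *)

(* Defs.v *)
From mathcomp Require Import all_boot all_fingroup all_solvable.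
Set Implicit Arguments. Unset Strict Implicit. Unset Printing Implicit Defensive.
Local Open Scope group_scope.

Definition stem_extension (gT hT : finGroupType) (G : {set gT})
    (H : {group hT}) (f : {morphism H >-> gT}) : Prop :=
  f @* H = G /\ 'ker f \subset 'Z(H) :&: H^`(1).

(* A Schur cover of G: a stem extension of maximal possible order among
   all stem extensions of G (its kernel is then isomorphic to M(G)). *)
Definition schur_cover (gT hT : finGroupType) (G : {set gT})
    (H : {group hT}) (f : {morphism H >-> gT}) : Prop :=
  stem_extension G f /\
  forall (kT : finGroupType) (K : {group kT}) (g : {morphism K >-> gT}),
    stem_extension G g -> #|K| <= #|H|.

(* Adjacency in the deep commuting graph, computed in the Schur cover (H, f):
   x <> y and some (equivalently every) preimages of x, y commute. *)
Definition deep_adj (gT hT : finGroupType) (H : {group hT})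
    (f : {morphism H >-> gT}) (x y : gT) : Prop :=
  x != y /\ exists a b, [/\ a \in H, b \in H, f a = x, f b = y & commute a b].

Definition deep_complete (gT hT : finGroupType) (G : {set gT})
    (H : {group hT}) (f : {morphism H >-> gT}) : Prop :=
  forall x y, x \in G -> y \in G -> x != y -> deep_adj f x y.

(* Main.v *)
From HB Require Import structures.
Require Import Defs.
From mathcomp Require Import all_boot all_fingroup all_solvable all_algebra all_character ring.
Set Implicit Arguments. Unset Strict Implicit. Unset Printing Implicit Defensive.
Import GRing.Theory.

Record bil (aT : finGroupType) (p : nat) := Bil {
  ba : aT -> 'F_p; bb : aT -> 'F_p;
  baM : forall x y : aT, ba (x * y)%g = (ba x + ba y)%R;
  bbM : forall x y : aT, bb (x * y)%g = (bb x + bb y)%R }.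

Definition heis (aT : finGroupType) p (B : bil aT p) : Type := (aT * 'F_p)%type.
HB.instance Definition _ aT p (B : bil aT p) := Finite.on (heis B).

Section H.
Context (aT : finGroupType) (p : nat) (B : bil aT p).
Local Open Scope ring_scope.
Definition hmul (u v : heis B) : heis B :=
  ((u.1 * v.1)%g, u.2 + v.2 + ba B u.1 * bb B v.1).
Definition hone : heis B := (1%g, 0).
Definition hinv (u : heis B) : heis B :=
  ((u.1^-1)%g, - u.2 - ba B (u.1^-1)%g * bb B u.1).
Lemma ba1 : ba B 1%g = 0.
Proof. have h := baM B 1%g 1%g; rewrite mulg1 in h; by apply: (addrI (ba B 1%g)); rewrite addr0 -h. Qed.
Lemma bb1 : bb B 1%g = 0.
Proof. have h := bbM B 1%g 1%g; rewrite mulg1 in h; by apply: (addrI (bb B 1%g)); rewrite addr0 -h. Qed.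
Lemma hmulA : associative hmul.
Proof.
move=> [x a] [y b] [z c]; rewrite /hmul /= mulgA baM bbM; congr pair; ring.
Qed.
Lemma hmul1 : left_id hone hmul.
Proof. by move=> [x a]; rewrite /hmul /= mul1g ba1 mul0r add0r addr0. Qed.
Lemma hmulV : left_inverse hone hinv hmul.
Proof. by move=> [x a]; rewrite /hmul /hone /= mulVg; congr pair; ring. Qed.
End H.
HB.instance Definition _ aT p (B : bil aT p) :=
  Finite_isGroup.Build (heis B) (@hmulA aT p B) (@hmul1 aT p B) (@hmulV aT p B).

Lemma heis_mulE aT p (B : bil aT p) (u v : heis B) :
  (u * v)%g = ((u.1 * v.1)%g, (u.2 + v.2 + ba B u.1 * bb B v.1)%R).
Proof. by []. Qed.

Local Open Scope group_scope.

Lemma Fp_as_nat p (x : 'F_p) : x = ((val x)%:R)%R.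
Proof. by rewrite natr_Zp. Qed.

Section Stem.
Variables (gT : finGroupType) (G : {group gT}) (p : nat) (B : bil (subg_of G) p).

Definition hproj (u : heis B) : gT := sgval u.1.
Lemma hprojM : {in [set: heis B] &, {morph hproj : x y / x * y}}.
Proof. by []. Qed.
Canonical hproj_morph := Morphism hprojM.

Lemma heis_stem (x y : subg_of G) :
  commute x y -> (ba B x * bb B y != ba B y * bb B x)%R ->
  stem_extension G hproj_morph /\ #|[set: heis B]%G| = (#|G| * #|'F_p|)%N.
Proof.
move=> cxy nd; split; last first.
  by rewrite /= cardsT card_prod card_sub.
split.
  apply/eqP; rewrite eqEsubset; apply/andP; split.
    by apply/subsetP=> z /morphimP[u _ _ ->]; apply: subgP.
  apply/subsetP=> z Gz; apply/morphimP; exists ((subg G z, 0%R) : heis B) => //.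
  by rewrite /= /hproj /= subgK.
set d := (ba B x * bb B y - ba B y * bb B x)%R.
have d0 : d != 0%R by rewrite subr_eq0.
pose a : heis B := (x, 0%R); pose b : heis B := (y, 0%R).
have cab : [~ a, b] = ((1, d) : heis B).
  apply: (mulgI (b * a)); rewrite -commgC !heis_mulE /= cxy mulg1 bb1.
  congr pair; rewrite /d; ring.
have pw : forall k, ((1, d) : heis B) ^+ k = ((1, (d *+ k)%R) : heis B).
  elim=> [|k IH]; first by [].
  by rewrite expgS IH heis_mulE /= mulg1 ba1 mul0r addr0 mulrS.
apply/subsetP=> u /mker; case: u => [u z]; rewrite /= /hproj /= => u1.
have -> : u = 1 by apply: subg_inj; rewrite u1.
rewrite inE; apply/andP; split.
  rewrite inE /= inE /=; apply/centP=> v _; rewrite /commute !heis_mulE /= mulg1 mul1g.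
  by congr pair; rewrite (ba1 B) (bb1 B); ring.
rewrite derg1 (_ : ((1, z) : heis B) = [~ a, b] ^+ (val (z / d)%R)).
  by apply: groupX; apply: mem_commg; rewrite inE.
rewrite cab pw -mulr_natr -Fp_as_nat mulrC divfK //.
Qed.
End Stem.

Local Open Scope group_scope.

Lemma central_lift (gT hT : finGroupType) (H : {group hT}) (f : {morphism H >-> gT})
  a b a' b' : 'ker f \subset 'Z(H) -> a \in H -> b \in H -> a' \in H -> b' \in H ->
  f a = f a' -> f b = f b' -> commute a' b' -> commute a b.
Proof.
move=> kZ Ha Hb Ha' Hb' fa fb c.
have kz : forall u v, u \in H -> v \in H -> f u = f v -> v^-1 * u \in 'Z(H).
  move=> u v Hu Hv fuv; apply: (subsetP kZ); apply/kerP; first by rewrite groupM ?groupV.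
  by rewrite morphM ?groupV // morphV // fuv mulVg.
have -> : a = a' * (a'^-1 * a) by rewrite mulKVg.
have -> : b = b' * (b'^-1 * b) by rewrite mulKVg.
have za := kz _ _ Ha Ha' fa; have zb := kz _ _ Hb Hb' fb.
have cZ : forall z u, z \in 'Z(H) -> u \in H -> commute z u.
  by move=> z u Zz Hu; apply/esym/(centerC Hu Zz).
apply: commuteM; apply: commute_sym; apply: commuteM.
- exact: commute_sym.
- apply: commute_sym; apply: cZ => //.
- by apply: cZ => //; rewrite groupM ?groupV.
- apply: commute_sym; apply: cZ => //.
  by rewrite groupM ?groupV //.
Qed.

Local Open Scope group_scope.

Lemma noncyclic_bil (gT : finGroupType) (G : {group gT}) :
  abelian G -> ~~ cyclic G ->
  exists p, exists B : bil (subg_of G) p, prime p /\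
    exists x y : subg_of G, commute x y /\ (ba B x * bb B y != ba B y * bb B x)%R.
Proof.
move=> abG ncG.
have cG : forall x y, x \in G -> y \in G -> commute x y.
  by move=> x y Gx Gy; apply: (centsP abG).
have [p p_pr rp] := rank_witness G.
have r2 : 2 <= 'r_p(G) by rewrite -rp ltnNge -abelian_rank1_cyclic.
have [E EE] := p_rank_geP r2.
have [sEG abE logE] := pnElemP EE.
have cardE := card_pnElem EE.
pose phi := fun x : gT => x ^+ p.
have phiM : {in G &, {morph phi : x y / x * y}}.
  by move=> x y Gx Gy; rewrite /phi expgMn //; apply: cG.
pose phim := Morphism phiM.
pose N := (phim @* G)%G.
have sNG : N \subset G.
  by apply/subsetP=> z /morphimP[g _ Gg ->]; rewrite /= /phi groupX.
have nNG : G \subset 'N(N) by apply: sub_abelian_norm.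
pose Q := (G / N)%G.
have abQ : p.-abelem Q.
  apply/abelemP => //; split; first exact: quotient_abelian.
  move=> q /morphimP[g Ng Gg ->]; rewrite -morphX //.
  apply: coset_id; apply/morphimP; exists g => //.
have cardQ : #|Q| = #|'ker phim|.
  rewrite /= card_quotient //.
  have L1 := Lagrange sNG.
  have L2 : 'ker phim \subset G by apply: subsetIl.
  have L3 := Lagrange L2.
  have cN : #|N| = #|G : 'ker phim| by rewrite card_morphim setIid.
  apply/eqP; rewrite -(eqn_pmul2l (cardG_gt0 N)) L1 {1}cN mulnC L3 //.
have EK : E \subset 'ker phim.
  apply/subsetP=> e Ee; apply/kerP; first exact: (subsetP sEG).
  rewrite /= /phi; by case/abelemP: abE => // _ ->.
have pQ := abelem_pgroup abQ.
have p1 := prime_gt1 p_pr.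
have n2 : 2 <= logn p #|Q|.
  rewrite -(leq_exp2l _ _ p1) -card_pgroup // -cardE cardQ.
  exact: subset_leq_card.
have ntQ : Q :!=: 1.
  apply/negP => /eqP Q1; move: n2; rewrite Q1 cards1 logn1 //.
pose ErV := abelem_rV abQ ntQ.
have dimQ : 1 < 'dim Q by rewrite (dim_abelemE abQ ntQ).
pose i0 : 'I_('dim Q) := Ordinal (ltnW dimQ).
pose i1 : 'I_('dim Q) := Ordinal dimQ.
have i01 : (i0 == i1) = false.
  by [].
pose al := fun u : subg_of G => ErV (coset N (sgval u)) ord0 i0.
pose be := fun u : subg_of G => ErV (coset N (sgval u)) ord0 i1.
have cM : forall u v : subg_of G, coset N (sgval (u * v)) = coset N (sgval u) * coset N (sgval v).
  move=> u v; rewrite (_ : sgval (u * v) = sgval u * sgval v) //.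
  by rewrite morphM // (subsetP nNG) // subgP.
have eM : forall u v : subg_of G, ErV (coset N (sgval (u * v))) = (ErV (coset N (sgval u)) + ErV (coset N (sgval v)))%R.
  by move=> u v; rewrite /ErV cM abelem_rV_M // mem_quotient // subgP.
have alM : forall u v, al (u * v) = (al u + al v)%R by move=> u v; rewrite /al eM mxE.
have beM : forall u v, be (u * v) = (be u + be v)%R by move=> u v; rewrite /be eM mxE.
exists p, (Bil alM beM); split => //.
have lift : forall i : 'I_('dim Q), exists x : subg_of G, ErV (coset N (sgval x)) = delta_mx ord0 i.
  move=> i; have : rVabelem abQ ntQ (delta_mx ord0 i) \in Q by apply: mem_rVabelem.
  case/morphimP=> g _ Gg eq; exists (subg G g); rewrite subgK // -eq.
  exact: rVabelemK.
have [x ex] := lift i0; have [y ey] := lift i1.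
exists x, y; split.
  by apply: subg_inj; rewrite /= cG // subgP.
rewrite /= /al /be ex ey !mxE !eqxx.
have -> : (i0 == i1) = false by [].
have -> : (i1 == i0) = false by [].
by [].
Qed.

Local Open Scope group_scope.

Theorem theorem3p3 (gT : finGroupType) (G : {group gT})
    (hT : finGroupType) (H : {group hT}) (f : {morphism H >-> gT}) :
  schur_cover G f -> (deep_complete G f <-> cyclic G).
Proof.
move=> [[imH kH] maxH].
have kZ : 'ker f \subset 'Z(H) by apply: subset_trans kH (subsetIl _ _).
have pre : forall x, x \in G -> exists2 a, a \in H & f a = x.
  by move=> x; rewrite -imH => /morphimP[a _ Ha ->]; exists a.
split; last first.
  case/cyclicP=> g defG x y Gx Gy nxy; split => //.
  have [h Hh fh] : exists2 h, h \in H & f h = g by apply: pre; rewrite defG cycle_id.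
  have [a Ha fa] := pre x Gx; have [b Hb fb] := pre y Gy.
  move: Gx Gy fa fb; rewrite defG => /cycleP[i ->] /cycleP[j ->] fa fb.
  exists a, b; split => //.
  apply: (central_lift kZ Ha Hb (groupX i Hh) (groupX j Hh)).
  - by rewrite fa morphX // fh.
  - by rewrite fb morphX // fh.
  - exact: commuteX2.
move=> dc.
have abH : abelian H.
  apply/centsP=> a Ha b Hb.
  have [e|ne] := eqVneq (f a) (f b).
    by apply: (central_lift kZ Ha Hb Ha Ha) => //; apply: commute_refl.
  have Ga : f a \in G by rewrite -imH mem_morphim.
  have Gb : f b \in G by rewrite -imH mem_morphim.
  have [_ [a' [b' [Ha' Hb' fa' fb' c]]]] := dc _ _ Ga Gb ne.
  exact: (central_lift kZ Ha Hb Ha' Hb' (esym fa') (esym fb') c).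
have injf : 'injm f.
  apply: subset_trans kH _; rewrite (derG1P abH); exact: subsetIr.
have cardH : #|G| = #|H| by rewrite -imH card_injm.
have abG : abelian G by rewrite -imH morphim_abelian.
case: (boolP (cyclic G)) => // ncG; exfalso.
have [p [B [p_pr [x [y [cxy nd]]]]]] := noncyclic_bil abG ncG.
have [st cK] := heis_stem cxy nd.
have := maxH _ _ _ st; rewrite cK -cardH card_Fp //.
rewrite -{2}(muln1 #|G|) leq_pmul2l ?cardG_gt0 // leqNgt.
by rewrite prime_gt1.
Qed.
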